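(* Let $M$ be a helix hypersurface in $E^n$ with direction $d$, and let $\alpha: I\subset\mathbb{R}\to M$ be a unit speed (arc-length parametrized) curve on $M$ with Frenet frame $\{V_1(s),\dots,V_n(s)\}$. If $\alpha$ is a geodesic curve on $M$, then $d\in\mathrm{Sp}\{V_2'\}^\perp$ along $\alpha$, i.e. $\langle V_2'(s),d\rangle=0$ for all $s\in I$.
   Context: $\langle\cdot,\cdot\rangle$ is the standard inner product on $E^n=\mathbb{R}^n$. A hypersurface $M\subset\mathbb{R}^n$ with unit normal $N$ is a helix with respect to a fixed unit direction $d$ if the angle between $d$ and $T_qM$ is the same for all $q\in M$, equivalently $\langle d,N\rangle$ is constant on $M$. The Frenet frame of a unit speed curve with nonvanishing curvatures $k_i$ is the orthonormal frame $\{V_1=\alpha',V_2,\dots,V_n\}$ with $V_1'=k_1V_2$, $V_i'=-k_{i-1}V_{i-1}+k_iV_{i+1}$ ($1<i<n$), $V_n'=-k_{n-1}V_{n-1}$. A curve on $M$ is a geodesic if $\alpha''$ is normal to $M$. $\mathrm{Sp}\{v\}^\perp$ is the orthogonal complement of the span of $v$. *)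

(* Defs.v *)
From HB Require Import structures.
From mathcomp Require Import all_boot all_order all_algebra.
From mathcomp Require Import all_classical all_reals all_analysis.
Set Implicit Arguments. Unset Strict Implicit. Unset Printing Implicit Defensive.
Import Order.TTheory GRing.Theory Num.Theory.
Import numFieldNormedType.Exports.
Local Open Scope classical_set_scope.
Local Open Scope ring_scope.

Definition dot (R : realType) (n : nat) (u v : 'rV[R]_n) : R :=
  \sum_(i < n) u ord0 i * v ord0 i.

Definition tangent_vec (R : realType) (n : nat) (M : set 'rV[R]_n)
    (q v : 'rV[R]_n) : Prop :=
  exists (g : R -> 'rV[R]_n) (e : R),
    [/\ 0 < e, (forall t : R, `|t| < e -> M (g t)), g 0 = q,
        derivable g 0 1 & derive1 g 0 = v].

Definition hypersurface_with_normal (R : realType) (n : nat)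
    (M : set 'rV[R]_n) (N : 'rV[R]_n -> 'rV[R]_n) : Prop :=
  {within M, continuous N} /\
  forall q, M q ->
    dot (N q) (N q) = 1 /\
    (forall v, tangent_vec M q v <-> dot v (N q) = 0).

Definition helix (R : realType) (n : nat) (M : set 'rV[R]_n)
    (N : 'rV[R]_n -> 'rV[R]_n) (d : 'rV[R]_n) : Prop :=
  dot d d = 1 /\ exists c : R, forall q, M q -> dot d (N q) = c.

(* alpha is a unit speed curve on I with Frenet frame V_1..V_n and
   nonvanishing curvatures k_1..k_(n-1) (indices 1..n as in the paper) *)
Definition frenet_frame (R : realType) (n : nat) (I : set R)
    (alpha : R -> 'rV[R]_n) (V : nat -> R -> 'rV[R]_n) (k : nat -> R -> R)
    : Prop :=
  forall s, I s ->
  [/\ derivable alpha s 1,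
      dot (derive1 alpha s) (derive1 alpha s) = 1,
      V 1%N s = derive1 alpha s &
      (forall i j, (1 <= i <= n)%N -> (1 <= j <= n)%N ->
         dot (V i s) (V j s) = (i == j)%:R)] /\
  [/\ (forall i, (1 <= i <= n)%N -> derivable (V i) s 1),
      (forall i, (1 <= i <= n.-1)%N -> k i s != 0),
      derive1 (V 1%N) s = k 1%N s *: V 2%N s,
      (forall i, (1 < i < n)%N ->
         derive1 (V i) s = - (k i.-1 s *: V i.-1 s) + k i s *: V i.+1 s) &
      derive1 (V n) s = - (k n.-1 s *: V n.-1 s)].

Definition geodesic_on (R : realType) (n : nat) (M : set 'rV[R]_n)
    (I : set R) (alpha : R -> 'rV[R]_n) : Prop :=
  forall s, I s ->
    derivable (derive1 alpha) s 1 /\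
    forall v, tangent_vec M (alpha s) v ->
      dot (derive1 (derive1 alpha) s) v = 0.

(* Main.v *)
Require Import Defs.
From HB Require Import structures.
From mathcomp Require Import all_boot all_order all_algebra.
From mathcomp Require Import all_classical all_reals all_analysis.
Import Order.TTheory GRing.Theory Num.Theory.
Import numFieldNormedType.Exports.
Local Open Scope classical_set_scope.
Local Open Scope ring_scope.

Section H.
Variables (R : realType) (n : nat).
Implicit Types u v w : 'rV[R]_n.

Lemma dotDl u v w : dot (u + v) w = dot u w + dot v w.
Proof. by rewrite /dot -big_split; apply: eq_bigr => i _; rewrite mxE mulrDl. Qed.
Lemma dotZl a u w : dot (a *: u) w = a * dot u w.
Proof. by rewrite /dot mulr_sumr; apply: eq_bigr => i _; rewrite mxE mulrA. Qed.
Lemma dotC u w : dot u w = dot w u.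
Proof. by apply: eq_bigr => i _; rewrite mulrC. Qed.
Lemma dotNl u w : dot (- u) w = - dot u w.
Proof. by rewrite -scaleN1r dotZl mulN1r. Qed.
Lemma dotBl u v w : dot (u - v) w = dot u w - dot v w.
Proof. by rewrite dotDl dotNl. Qed.
Lemma dot_eq0 u : dot u u = 0 -> u = 0.
Proof.
move=> h; apply/matrixP => i j; rewrite (ord1 i) mxE.
have /eqP := h; rewrite /dot psumr_eq0; last by move=> k _; rewrite -expr2 sqr_ge0.
by move/allP/(_ j (mem_index_enum _)); rewrite implyTb mulf_eq0 orbb => /eqP.
Qed.

Definition Ld (d : 'rV[R]_n) (u : 'rV[R]_n) : R^o := dot u d.
Lemma Ld_cont d : continuous (Ld d).
Proof.
rewrite /Ld /dot.
apply: (@continuous_big _ _ +%R 0 xpredT add_continuous) => i _ x.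
apply: (@continuousM R _ (fun u : 'rV[R]_n => u ord0 i) (fun=> d ord0 i));  first exact: coord_continuous. exact: cst_continuous.
Qed.
Lemma Ld_lin d : linear (Ld d).
Proof. by move=> a u v; rewrite /Ld dotDl dotZl. Qed.
HB.instance Definition _ d := GRing.isLinear.Build R 'rV[R]_n R^o _ (Ld d) (Ld_lin d).

Lemma dot_derive (f : R -> 'rV[R]_n) d s : derivable f s 1 ->
  'D_1 (fun t => dot (f t) d) s = dot ('D_1 f s) d.
Proof.
move=> df; have dfs : differentiable f s by apply/derivable1_diffP.
have dL : differentiable (Ld d) (f s) by apply: linear_differentiable; exact: Ld_cont.
rewrite (_ : (fun t => dot (f t) d) = Ld d \o f) //.
rewrite deriveE; last exact: differentiable_comp.
rewrite diff_comp // diff_lin /=; last exact: Ld_cont.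
by rewrite -deriveE.
Qed.
End H.
Arguments Ld {R n}. Arguments Ld_cont {R n}. Arguments dot_derive {R n}.
Theorem corollary3p2 (R : realType) (n : nat) (M : set 'rV[R]_n)
    (N : 'rV[R]_n -> 'rV[R]_n) (d : 'rV[R]_n) (I : set R)
    (alpha : R -> 'rV[R]_n) (V : nat -> R -> 'rV[R]_n) (k : nat -> R -> R) :
  (2 <= n)%N ->
  hypersurface_with_normal M N ->
  helix M N d ->
  open I -> is_interval I ->
  (forall s, I s -> M (alpha s)) ->
  frenet_frame I alpha V k ->
  geodesic_on M I alpha ->
  forall s, I s -> dot (derive1 (V 2%N) s) d = 0.
Proof.
move=> n2 [_ hN] [_ [c hc]] oI _ aM fr geo.
have key : forall t, I t -> (dot (V 2%N t) d) ^+ 2 = c ^+ 2.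
  move=> t It.
  have [[_ _ V1 _] [_ kn0 dV1 _ _]] := fr t It.
  have [_ geot] := geo t It.
  have [NN Tg] := hN _ (aM t It).
  have k1 : k 1%N t != 0 by apply: kn0; rewrite /= -ltnS prednK //; apply: leq_trans n2.
  have eqd : derive1 (derive1 alpha) t = derive1 (V 1%N) t.
    rewrite !derive1E; apply: near_eq_derive.
    have nI : nbhs t I by apply: open_nbhs_nbhs; split.
    apply: filterS nI => x Ix; have [[_ _ -> _] _] := fr x Ix; by [].
  set W := V 2%N t; set P := N (alpha t); set p := dot W P.
  have orth : forall w, dot w P = 0 -> dot W w = 0.
    move=> w /Tg /geot; rewrite eqd dV1 dotZl => /eqP.
    by rewrite mulf_eq0 (negbTE k1) /= => /eqP.
  have hw : dot (W - p *: P) P = 0 by rewrite dotBl dotZl NN mulr1 subrr.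
  have ww : dot (W - p *: P) (W - p *: P) = 0.
    rewrite dotBl dotZl [dot P _]dotC hw mulr0 subr0.
    exact: orth.
  have WE : W = p *: P by apply/eqP; rewrite -subr_eq0; apply/eqP/dot_eq0.
  have [[_ _ _ on] _] := fr t It.
  have W1 : dot W W = 1 by rewrite /W on.
  rewrite WE dotZl [dot P d]dotC (hc _ (aM t It)).
  move: W1; rewrite WE dotZl dotC dotZl NN mulr1 => p1.
  by rewrite exprMn expr2 p1 mul1r.
move=> s Is.
have [[_ _ _ _] [dV _ _ _ _]] := fr s Is.
have dV2 : derivable (V 2%N) s 1 by apply: dV; rewrite n2.
set g := fun t => dot (V 2%N t) d.
have nI : nbhs s I by apply: open_nbhs_nbhs; split.
have gc : {for s, continuous g}.
  have := differentiable_continuous (proj1 (derivable1_diffP _ _) dV2).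
  move=> cV; change ({for s, continuous (Ld d \o V 2%N)}). exact: (continuous_comp cV (Ld_cont d (V 2%N s))).
have loc : \forall t \near s, g t = g s.
  have [gs0|gsn0] := eqVneq (g s) 0.
    apply: filterS nI => t It; rewrite gs0.
    have := key t It; rewrite -(key s Is) -/(g s) gs0 expr0n /=.
    by move/eqP; rewrite sqrf_eq0 => /eqP.
  have gsp : 0 < `|g s| by rewrite normr_gt0.
  have := gc; move=> /cvgrPdist_lt /(_ _ gsp).
  apply: filter_app; apply: filterS nI => t It hlt.
  have := key t It; rewrite -(key s Is) -/(g t) -/(g s) => /eqP.
  rewrite -subr_eq0 subr_sqr mulf_eq0 => /orP[|]; first by rewrite subr_eq0 => /eqP.
  rewrite addr_eq0 => /eqP gt; move: hlt; rewrite gt opprK -mulr2n normrMn.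
  by rewrite mulr2n gtrDl ltNge normr_ge0.
rewrite derive1E -(dot_derive _ d _ dV2) -/g.
rewrite (near_eq_derive _ loc) derive_cst //.
Qed.
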